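(* Let $\Gamma$ be a connected infinite graph whose vertices have uniformly bounded degree. Then $\Gamma$ is bilipschitz equivalent to a graph admitting a bi-infinite Hamiltonian path if and only if $\Gamma$ has at most two ends.
   Context: Graphs are regarded as metric spaces on their vertex sets via the path-length metric. Two graphs are bilipschitz equivalent if there is a bijection $f$ between their vertex sets and $c>0$ with $\frac1c d(x,y)\le\rho(f(x),f(y))\le c\,d(x,y)$ for all vertices $x,y$. A bi-infinite Hamiltonian path is a bijection $P:\mathbb{Z}\to V(\Gamma')$ with $P(i)$ adjacent to $P(i+1)$ for all $i$. The number of ends of a connected graph $\Gamma$ is the supremum, over finite sets $A$ of edges, of the number of infinite connected components of $\Gamma - A$. *)

(* Defs.v *)
From Stdlib Require Import Reals ZArith List.
Open Scope R_scope.

Definition simple_graph {V : Type} (adj : V -> V -> Prop) : Prop :=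
  (forall x y, adj x y -> adj y x) /\ (forall x, ~ adj x x).

Inductive walk {V : Type} (adj : V -> V -> Prop) : V -> V -> nat -> Prop :=
| walk_nil : forall x, walk adj x x 0
| walk_cons : forall x y z n, adj x y -> walk adj y z n -> walk adj x z (S n).

Definition gdist {V : Type} (adj : V -> V -> Prop) (x y : V) (n : nat) : Prop :=
  walk adj x y n /\ forall m, walk adj x y m -> (n <= m)%nat.

Definition connected_graph {V : Type} (adj : V -> V -> Prop) : Prop :=
  forall x y : V, exists n, walk adj x y n.

Definition finite_set {V : Type} (S : V -> Prop) : Prop :=
  exists l : list V, forall v, S v -> In v l.

Definition infinite_type (V : Type) : Prop := ~ finite_set (fun _ : V => True).

Definition bounded_degree {V : Type} (adj : V -> V -> Prop) : Prop :=
  exists D : nat, forall v : V,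
    exists l : list V, (length l <= D)%nat /\ forall w, adj v w -> In w l.

Definition bijective_map {V W : Type} (f : V -> W) : Prop :=
  (forall x y, f x = f y -> x = y) /\ (forall w, exists v, f v = w).

(* Bilipschitz equivalence of the path metrics (distances in the target must
   exist, i.e. be finite, and satisfy the two-sided bound). *)
Definition bilipschitz_equiv {V W : Type} (adjV : V -> V -> Prop)
    (adjW : W -> W -> Prop) : Prop :=
  exists (f : V -> W) (c : R), bijective_map f /\ 0 < c /\
    forall x y n, gdist adjV x y n ->
      exists m, gdist adjW (f x) (f y) m /\
        INR n / c <= INR m /\ INR m <= c * INR n.

Definition biinf_hamiltonian_path {W : Type} (adj : W -> W -> Prop) (P : Z -> W) : Prop :=
  bijective_map P /\ forall i : Z, adj (P i) (P (i + 1)%Z).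

(* Γ - A, where A is a finite set of edges given as a list of vertex pairs. *)
Definition remove_edges {V : Type} (adj : V -> V -> Prop) (A : list (V * V))
    (x y : V) : Prop :=
  adj x y /\ ~ In (x, y) A /\ ~ In (y, x) A.

Definition conn {V : Type} (adj : V -> V -> Prop) (x y : V) : Prop :=
  exists n, walk adj x y n.

Definition infinite_component {V : Type} (adj : V -> V -> Prop) (x : V) : Prop :=
  ~ finite_set (conn adj x).

(* Gamma - A has at most two infinite connected components: among any three
   vertices lying in infinite components, two lie in the same component. *)
Definition at_most_two_infinite_components {V : Type} (adj : V -> V -> Prop) : Prop :=
  forall x1 x2 x3 : V,
    infinite_component adj x1 -> infinite_component adj x2 ->
    infinite_component adj x3 ->
    conn adj x1 x2 \/ conn adj x1 x3 \/ conn adj x2 x3.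

(* Gamma has at most two ends: the supremum over finite edge sets A of the
   number of infinite components of Gamma - A is <= 2. *)
Definition at_most_two_ends {V : Type} (adj : V -> V -> Prop) : Prop :=
  forall A : list (V * V), at_most_two_infinite_components (remove_edges adj A).

(* Main.v *)
Require Import Defs.
From Stdlib Require Import Reals ZArith List Lia Lra Classical ClassicalEpsilon.
Import ListNotations.

Section Walks.
Context {V : Type}.

Lemma walk_app (R : V -> V -> Prop) x y z n m :
  walk R x y n -> walk R y z m -> walk R x z (n + m).
Proof.
  induction 1; intros; simpl; auto.
  econstructor; eauto.
Qed.

Lemma walk_one (R : V -> V -> Prop) x y : R x y -> walk R x y 1.
Proof. intros; econstructor; eauto; constructor. Qed.

Lemma walk_snoc (R : V -> V -> Prop) x y z n :
  walk R x y n -> R y z -> walk R x z (S n).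
Proof. intros H1 H2. replace (S n) with (n + 1)%nat by lia.
  eapply walk_app; eauto using walk_one. Qed.

Lemma walk_sym (R : V -> V -> Prop) (Hs : forall a b, R a b -> R b a) x y n :
  walk R x y n -> walk R y x n.
Proof.
  induction 1. constructor.
  eapply walk_snoc; eauto.
Qed.

Lemma walk_mono (R R' : V -> V -> Prop) (H : forall a b, R a b -> R' a b) x y n :
  walk R x y n -> walk R' x y n.
Proof. induction 1; econstructor; eauto. Qed.

End Walks.

Section Graph.
Context {V : Type} (adj : V -> V -> Prop).
Hypothesis adj_sym : forall x y, adj x y -> adj y x.

Definition rP (P : V -> Prop) a b := P a /\ P b /\ adj a b.
Definition cin (P : V -> Prop) x y := exists n, walk (rP P) x y n.
Definition near k x y := exists n, (n <= k)%nat /\ walk adj x y n.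

Lemma rP_sym P a b : rP P a b -> rP P b a.
Proof. unfold rP; intuition. Qed.

Lemma cin_refl P x : cin P x x.
Proof. exists 0%nat; constructor. Qed.
Lemma cin_sym P x y : cin P x y -> cin P y x.
Proof. intros [n H]; exists n; apply walk_sym; auto using rP_sym. Qed.
Lemma cin_trans P x y z : cin P x y -> cin P y z -> cin P x z.
Proof. intros [n H] [m H']; exists (n+m)%nat; eapply walk_app; eauto. Qed.
Lemma cin_step P x y : P x -> P y -> adj x y -> cin P x y.
Proof. intros; exists 1%nat; apply walk_one; red; auto. Qed.
Lemma cin_ext P Q x y : (forall z, P z -> Q z) -> cin P x y -> cin Q x y.
Proof. intros H [n W]; exists n; eapply walk_mono; [|exact W]. unfold rP; intuition. Qed.

Lemma walk_rP_end P x y n : walk (rP P) x y n -> x <> y -> P x /\ P y.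
Proof.
  induction 1; intros. congruence.
  destruct H as [? [? ?]]. split; auto.
  destruct (classic (y = z)). subst; auto. apply IHwalk; auto.
Qed.

Lemma cin_end P x y : cin P x y -> P x -> P y.
Proof.
  intros [n W] Hx. destruct (classic (x = y)). subst; auto.
  apply (walk_rP_end _ _ _ _ W H).
Qed.

Lemma walk_restrict P Q x y n : walk (rP P) x y n ->
  (forall z, cin P x z -> Q z) -> walk (rP (fun z => P z /\ Q z)) x y n.
Proof.
  induction 1; intros HQ. constructor.
  apply walk_cons with y.
  - destruct H as [? [? ?]]. split; [split; [auto| apply HQ, cin_refl] | split; [split; [auto| apply HQ, cin_step; auto]| auto]].
  - apply IHwalk. intros w Hw. apply HQ. eapply cin_trans; eauto.
    destruct H as [? [? ?]]; apply cin_step; auto.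
Qed.

Lemma cin_restrict P Q x y : cin P x y -> (forall z, cin P x z -> Q z) ->
  cin (fun z => P z /\ Q z) x y.
Proof. intros [n W] H; exists n; apply walk_restrict; auto. Qed.

Lemma walk_near x y n : walk adj x y n -> near n x y.
Proof. intros; exists n; auto. Qed.

Lemma near_sym k x y : near k x y -> near k y x.
Proof. intros [n [? W]]; exists n; split; auto; apply walk_sym; auto. Qed.
Lemma near_trans a b x y z : near a x y -> near b y z -> near (a+b) x z.
Proof. intros [n [? W]] [m [? W']]; exists (n+m)%nat; split. lia. eapply walk_app; eauto. Qed.
Lemma near_mono a b x y : (a <= b)%nat -> near a x y -> near b x y.
Proof. intros ? [n [? W]]; exists n; split; auto; lia. Qed.
Lemma near_adj x y : adj x y -> near 1 x y.
Proof. intros; exists 1%nat; split; auto; apply walk_one; auto. Qed.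
Lemma near_refl x : near 0 x x.
Proof. exists 0%nat; split; auto; constructor. Qed.

Inductive chain (K : nat) : list V -> Prop :=
| ch0 : chain K []
| ch1 x : chain K [x]
| ch2 x y l : near K x y -> chain K (y :: l) -> chain K (x :: y :: l).

Lemma chain_app K l1 a b l2 : chain K (l1 ++ [a]) -> chain K (b :: l2) -> near K a b ->
  chain K (l1 ++ a :: b :: l2).
Proof.
  induction l1 as [|x l1 IH]; simpl; intros H1 H2 H3.
  - constructor; auto.
  - destruct l1 as [|y l1]; simpl in *.
    + inversion H1; subst. constructor; auto.
    + inversion H1; subst. constructor; auto.
Qed.

Lemma chain_tail K x l : chain K (x :: l) -> chain K l.
Proof. inversion 1; subst; constructor || auto. Qed.

Lemma chain_rev_aux K l x : chain K (x :: l) -> chain K (rev l ++ [x]).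
Proof.
  revert x; induction l as [|y l IH]; intros x H; simpl. constructor.
  inversion H; subst. rewrite <- app_assoc. simpl.
  apply chain_app; auto. constructor. apply near_sym; auto.
Qed.

Lemma chain_rev K l : chain K l -> chain K (rev l).
Proof. destruct l. simpl; constructor. intros; simpl; apply chain_rev_aux; auto. Qed.

Lemma chain_mono K K' l : (K <= K')%nat -> chain K l -> chain K' l.
Proof. induction 2; constructor; eauto using near_mono. Qed.

End Graph.

Definition eqd {V : Type} (x y : V) : {x = y} + {x <> y} := excluded_middle_informative (x = y).

Section Fin.
Context {V : Type}.

Definition decb (P : Prop) : bool := if excluded_middle_informative P then true else false.
Lemma decb_true P : decb P = true <-> P.
Proof. unfold decb; destruct excluded_middle_informative; split; intros; auto; discriminate. Qed.

Lemma fin_sub (S T : V -> Prop) : finite_set S -> (forall x, T x -> S x) -> finite_set T.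
Proof. intros [l H] H'; exists l; auto. Qed.

Lemma fin_exact (S : V -> Prop) : finite_set S -> exists l, NoDup l /\ forall x, S x <-> In x l.
Proof.
  intros [l H].
  exists (nodup eqd (filter (fun x => decb (S x)) l)). split. apply NoDup_nodup.
  intros x. rewrite nodup_In, filter_In, decb_true. intuition.
Qed.

Lemma fin_union (l : list V) (S : V -> V -> Prop) :
  (forall a, In a l -> finite_set (S a)) -> finite_set (fun x => exists a, In a l /\ S a x).
Proof.
  induction l as [|a l IH]; intros H.
  - exists []. intros x [a [[] _]].
  - destruct (H a (or_introl eq_refl)) as [la Ha].
    destruct IH as [lb Hb]. intros; apply H; right; auto.
    exists (la ++ lb). intros x [b [[<-|Hb'] Hx]]; apply in_or_app. left; auto.
    right; apply Hb; eauto.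
Qed.

Lemma fin_or (S T : V -> Prop) : finite_set S -> finite_set T -> finite_set (fun x => S x \/ T x).
Proof. intros [l1 H1] [l2 H2]; exists (l1 ++ l2); intros x [?|?]; apply in_or_app; auto. Qed.

Lemma fin_list (l : list V) : finite_set (fun x => In x l).
Proof. exists l; auto. Qed.

Lemma inf_minus (S T : V -> Prop) : ~ finite_set S -> finite_set T -> ~ finite_set (fun x => S x /\ ~ T x).
Proof.
  intros HS HT HF. apply HS. eapply fin_sub. apply (fin_or _ _ HF HT).
  intros x Hx. destruct (classic (T x)); auto.
Qed.

Lemma inf_minus_list (S : V -> Prop) l : ~ finite_set S -> ~ finite_set (fun x => S x /\ ~ In x l).
Proof. intros; apply inf_minus; auto; apply fin_list. Qed.

Lemma fin_max (l : list V) (Q : V -> nat -> Prop) :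
  (forall a n m, (n <= m)%nat -> Q a n -> Q a m) ->
  (forall a, In a l -> exists n, Q a n) -> exists N, forall a, In a l -> Q a N.
Proof.
  intros Hm; induction l as [|a l IH]; intros H.
  - exists 0%nat; intros a [].
  - destruct (H a (or_introl eq_refl)) as [n Hn]. destruct IH as [N HN]. intros; apply H; right; auto.
    exists (n + N)%nat. intros b [<-|Hb]; eapply Hm; [|eauto| |eauto]; lia.
Qed.

End Fin.

Section Loc.
Context {V : Type} (adj : V -> V -> Prop).
Hypothesis adj_sym : forall x y, adj x y -> adj y x.
Hypothesis adj_irr : forall x, ~ adj x x.
Hypothesis nbh : forall v, exists l, forall w, adj v w -> In w l.

Definition nb (v : V) : list V := proj1_sig (constructive_indefinite_description _ (nbh v)).
Lemma nb_spec v w : adj v w -> In w (nb v).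
Proof. unfold nb; destruct constructive_indefinite_description; simpl; auto. Qed.

Lemma walk_last (R : V -> V -> Prop) x y n : walk R x y (S n) -> exists y', walk R x y' n /\ R y' y.
Proof.
  revert x; induction n; intros x H; inversion H; subst.
  - inversion H4; subst. exists x; split; auto; constructor.
  - destruct (IHn _ H4) as [y' [W R']]. exists y'; split; auto. econstructor; eauto.
Qed.

Lemma ball_fin x n : finite_set (near adj n x).
Proof.
  induction n.
  - exists [x]. intros y [m [Hm W]]. assert (m = 0%nat) by lia; subst. inversion W; subst; left; auto.
  - destruct IHn as [l Hl]. exists (l ++ flat_map nb l). intros y [m [Hm W]].
    apply in_or_app. destruct (Nat.eq_dec m (S n)).
    + subst. destruct (walk_last _ _ _ _ W) as [y' [W' A]]. right. apply in_flat_map.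
      exists y'; split. apply Hl; exists n; auto. apply nb_spec; auto.
    + left; apply Hl; exists m; split; auto; lia.
Qed.

Lemma ballset_fin (B : list V) n : finite_set (fun y => exists b, In b B /\ near adj n b y).
Proof. apply fin_union; intros; apply ball_fin. Qed.

Section Comps.
Variable P : V -> Prop.
Hypothesis Pconn : forall x y, P x -> P y -> cin adj P x y.
Variable K : list V.
Variable k0 : V.
Hypothesis Pk0 : P k0.
Hypothesis Kk0 : In k0 K.
Let X := fun x => P x /\ ~ In x K.

Lemma comps_exit x : X x -> exists a b, cin adj X x a /\ X a /\ P b /\ In b K /\ adj a b.
Proof.
  intros Hx. destruct (Pconn x k0 (proj1 Hx) Pk0) as [n W].
  assert (forall x y n, walk (rP adj P) x y n -> In y K -> X x ->
     exists a b, cin adj X x a /\ X a /\ P b /\ In b K /\ adj a b).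
  { clear. induction 1; intros Hy Hx.
    - exfalso; apply (proj2 Hx); auto.
    - destruct H as [Px [Py A]]. destruct (classic (In y K)).
      + exists x, y; repeat split; auto; try apply cin_refl; apply Hx.
      + destruct IHwalk as [a [b [C Hr]]]; auto. split; auto.
        exists a, b; split; auto. eapply cin_trans; eauto. apply cin_step; auto; split; auto. }
  eapply H; eauto.
Qed.

Lemma comps_finpart : finite_set (fun x => X x /\ finite_set (fun y => cin adj X x y)).
Proof.
  eapply fin_sub. apply (fin_union (flat_map nb K)
     (fun a y => finite_set (fun z => cin adj X a z) /\ cin adj X a y)).
  - intros a _. destruct (classic (finite_set (fun z => cin adj X a z))).
    + eapply fin_sub; eauto. intros y [? ?]; auto.
    + exists []. intros y [? ?]; contradiction.
  - intros x [Hx Hf]. destruct (comps_exit x Hx) as [a [b [C [Xa [Pb [Kb A]]]]]].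
    exists a. split. apply in_flat_map. exists b; split; auto. apply nb_spec; auto.
    split. eapply fin_sub; eauto. intros y Hy; eapply cin_trans; eauto.
    apply cin_sym; auto.
Qed.

Lemma comps_inf (Q : V -> Prop) : (forall x, Q x -> X x) ->
  ~ finite_set Q -> exists a, Q a /\ ~ finite_set (fun y => cin adj X a y).
Proof.
  intros HQ HI. apply NNPP; intro HN. apply HI.
  eapply fin_sub. apply comps_finpart. intros x Qx. split; auto.
  apply NNPP; intro. apply HN; eauto.
Qed.

End Comps.

End Loc.

Section Enum.
Context {V : Type} (adj : V -> V -> Prop).
Hypothesis adj_sym : forall x y, adj x y -> adj y x.
Hypothesis adj_irr : forall x, ~ adj x x.

Section Split.
Variables (F : V -> Prop) (r c : V).
Hypotheses (Fr : F r) (Fc : F c) (crn : c <> r) (Fconn : forall x, F x -> cin adj F r x).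
Definition Fm := fun z => F z /\ z <> r.
Definition Cs := fun x => F x /\ x <> r /\ cin adj Fm c x.
Definition F' := fun x => F x /\ ~ Cs x.

Lemma split_Cc : Cs c.
Proof. repeat split; auto. apply cin_refl. Qed.

Lemma split_F'r : F' r.
Proof. split; auto. intros [_ [H _]]; auto. Qed.

Lemma split_Cconn x : Cs x -> cin adj Cs c x.
Proof.
  intros Hx. eapply cin_ext; [|apply (cin_restrict adj Fm Cs c x)].
  - intros z [_ H]; auto.
  - apply Hx.
  - intros z Hz. assert (Fm z) by (eapply cin_end; eauto; split; auto).
    destruct H; repeat split; auto.
Qed.

Lemma split_adj : exists c', Cs c' /\ adj c' r.
Proof.
  destruct (cin_sym adj adj_sym _ _ _ (Fconn c Fc)) as [n W].
  assert (forall x y n, walk (rP adj F) x y n -> Cs x -> y = r -> exists c', Cs c' /\ adj c' r).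
  { clear. induction 1; intros Cx E.
    - subst. destruct Cx as [_ [? _]]; congruence.
    - destruct H as [Fx [Fy A]]. destruct (classic (y = r)).
      + subst; eauto.
      + apply IHwalk; auto. destruct Cx as [? [? ?]]. repeat split; auto.
        eapply cin_trans; eauto. apply cin_step; unfold Fm; try split; auto. }
  eapply H; eauto using split_Cc.
Qed.

Lemma split_F'conn x : F' x -> cin adj F' r x.
Proof.
  intros Hx.
  assert (forall a x n, walk (rP adj F) a x n -> (a = r \/ Cs a \/ cin adj F' r a) ->
     (x = r \/ Cs x \/ cin adj F' r x)).
  { clear x Hx. induction 1; intros Ha; auto.
    apply IHwalk. destruct H as [Fx [Fy A]].
    destruct (classic (y = r)); auto. right.
    destruct (classic (Cs y)); auto. right.
    destruct Ha as [->|[Cx|Cx]].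
    - apply cin_step; auto. apply split_F'r. split; auto.
    - exfalso. apply H1. destruct Cx as [? [? ?]]. repeat split; auto.
      eapply cin_trans; eauto. apply cin_step; unfold Fm; try split; auto.
    - eapply cin_trans; eauto. apply cin_step; auto.
      destruct (classic (x = r)). subst; apply split_F'r.
      eapply cin_end; eauto. apply split_F'r. split; auto. }
  destruct (Fconn x (proj1 Hx)) as [n W].
  destruct (H _ _ _ W (or_introl eq_refl)) as [->|[C|C]]; auto.
  apply cin_refl. destruct Hx; contradiction.
Qed.

End Split.

Definition enum_of (F : V -> Prop) (E : list V) (u w : V) :=
  NoDup E /\ (forall x, In x E <-> F x) /\ (exists E0, E = u :: E0) /\ chain adj 3 E /\
  (exists E1 e, E = E1 ++ [e] /\ near adj 1 e w).

Definition fsize (F : V -> Prop) n := exists l, (length l <= n)%nat /\ forall x, F x -> In x l.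

Lemma fsize_remove F n a l : (length l <= S n)%nat -> (forall x, F x -> In x l) -> In a l ->
  ~ F a -> fsize F n.
Proof.
  intros Hl HF Ha Hn. exists (remove eqd a l). split.
  pose proof (remove_length_lt eqd l a Ha). lia.
  intros x Fx. apply in_in_remove; auto. intro; subst; contradiction.
Qed.

Lemma enum1 n : forall F r, fsize F n -> F r -> (forall x, F x -> cin adj F r x) ->
  exists E, enum_of F E r r.
Proof.
  induction n; intros F r [l [Hl HF]] Fr Fconn.
  - destruct l; [|simpl in Hl; lia]. destruct (HF r Fr).
  - destruct (classic (exists c, F c /\ c <> r)) as [[c [Fc cr]]|Hno].
    + destruct (split_adj F r c) as [c' [Cc' Ac']]; auto.
      assert (Cconn : forall x, Cs F r c x -> cin adj (Cs F r c) c' x).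
      { intros. eapply cin_trans. apply cin_sym; auto. apply split_Cconn; auto.
        apply split_Cconn; auto. }
      destruct (IHn (F' F r c) r) as [E1 [N1 [M1 [[E10 H10] [Ch1 [E11 [e1 [H11 Ne1]]]]]]]].
      { apply (fsize_remove _ n c l); auto. intros x [? ?]; auto. intros [_ HH]. apply HH. apply split_Cc; auto. }
      apply split_F'r; auto. apply split_F'conn; auto.
      destruct (IHn (Cs F r c) c') as [E2 [N2 [M2 [[E20 H20] [Ch2 [E21 [e2 [H21 Ne2]]]]]]]].
      { apply (fsize_remove _ n r l); auto. intros x [? ?]; auto. intros [_ [HH _]]. auto. }
      auto. auto.
      exists (E1 ++ rev E2). split; [|split; [|split; [|split]]].
      * apply NoDup_app; auto. apply NoDup_rev; auto.
        intros a Ha Hb. rewrite <- in_rev in Hb. apply M1 in Ha; apply M2 in Hb. destruct Ha; contradiction.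
      * intros x. rewrite in_app_iff, <- in_rev, M1, M2. unfold F'. split.
        intros [[? ?]|[? ?]]; auto. intros Fx. destruct (classic (Cs F r c x)); auto.
      * rewrite H10; eexists; simpl; eauto.
      * rewrite H11, H21, rev_app_distr. simpl. rewrite <- app_assoc. simpl.
        apply chain_app. rewrite <- H11; auto.
        replace (e2 :: rev E21) with (rev (E21 ++ [e2])). rewrite <- H21. apply chain_rev; auto.
        rewrite rev_app_distr; auto.
        replace 3%nat with (1 + 1 + 1)%nat by lia.
        apply (near_trans adj (1+1) 1 e1 c' e2). apply (near_trans adj 1 1 e1 r c'); auto.
        apply near_adj; auto. apply near_sym; auto.
      * rewrite H20. simpl. exists (E1 ++ rev E20), c'. rewrite app_assoc. split; auto.
        apply near_adj; auto.
    + exists [r]. split; [|split; [|split; [|split]]].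
      * constructor; auto. constructor.
      * intros x; split. intros [<-|[]]; auto. intros Fx. left. apply NNPP; intro; apply Hno; eauto.
      * eauto.
      * constructor.
      * exists [], r; split; auto. apply near_mono with 0%nat; auto. apply near_refl.
Qed.

Lemma enum2 n : forall F u w, fsize F n -> F u -> F w -> (forall x, F x -> cin adj F u x) ->
  exists E, enum_of F E u w.
Proof.
  induction n; intros F u w [l [Hl HF]] Fu Fw Fconn.
  - destruct l; [|simpl in Hl; lia]. destruct (HF u Fu).
  - destruct (classic (w = u)) as [->|wu].
    + eapply enum1; eauto. exists l; auto.
    + destruct (split_adj F u w) as [c' [Cc' Ac']]; auto.
      assert (Cconn : forall x, Cs F u w x -> cin adj (Cs F u w) c' x).
      { intros. eapply cin_trans. apply cin_sym; auto. apply split_Cconn; auto.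
        apply split_Cconn; auto. }
      destruct (enum1 (S n) (F' F u w) u) as [E1 [N1 [M1 [[E10 H10] [Ch1 [E11 [e1 [H11 Ne1]]]]]]]].
      { exists l; split; auto. intros x [? ?]; auto. }
      apply split_F'r; auto. apply split_F'conn; auto.
      destruct (IHn (Cs F u w) c' w) as [E2 [N2 [M2 [[E20 H20] [Ch2 [E21 [e2 [H21 Ne2]]]]]]]].
      { apply (fsize_remove _ n u l); auto. intros x [? ?]; auto. intros [_ [HH _]]. auto. }
      auto. apply split_Cc; auto. auto.
      exists (E1 ++ E2). split; [|split; [|split; [|split]]].
      * apply NoDup_app; auto.
        intros a Ha Hb. apply M1 in Ha; apply M2 in Hb. destruct Ha; contradiction.
      * intros x. rewrite in_app_iff, M1, M2. unfold F'. split.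
        intros [[? ?]|[? ?]]; auto. intros Fx. destruct (classic (Cs F u w x)); auto.
      * rewrite H10; eexists; simpl; eauto.
      * rewrite H11, H20, <- app_assoc. simpl.
        apply chain_app. rewrite <- H11; auto. rewrite <- H20; auto.
        apply near_mono with (1 + 1)%nat. lia.
        apply (near_trans adj 1 1 e1 u c'); auto. apply near_adj; auto.
      * rewrite H21. exists (E1 ++ E21), e2. rewrite app_assoc. split; auto.
Qed.

End Enum.

Lemma chain_glue {V} (adj : V -> V -> Prop) K l1 a l2 :
  chain adj K (l1 ++ [a]) -> chain adj K (a :: l2) -> chain adj K (l1 ++ a :: l2).
Proof.
  destruct l2 as [|b l2]; auto. intros H1 H2. inversion H2; subst.
  apply chain_app; auto.
Qed.

Lemma walk_pts {V} (R : V -> V -> Prop) x y m : walk R x y m -> forall Q : V -> Prop,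
  (forall z k, (k <= m)%nat -> walk R x z k -> Q z) -> walk (fun a b => R a b /\ Q a /\ Q b) x y m.
Proof.
  induction 1; intros Q HQ. constructor.
  apply walk_cons with y. split; auto. split. apply (HQ x 0%nat). lia. constructor.
  apply (HQ y 1%nat). lia. apply walk_one; auto.
  apply IHwalk. intros z' k Hk W. apply (HQ z' (S k)). lia. econstructor; eauto.
Qed.

Lemma walk_cross {V} (R : V -> V -> Prop) (Q : V -> Prop) x y m : walk R x y m -> ~ Q x -> Q y ->
  exists a b, R a b /\ ~ Q a /\ Q b.
Proof.
  induction 1; intros Hx Hy. contradiction.
  destruct (classic (Q y)). exists x, y; auto. apply IHwalk; auto.
Qed.

Lemma chain_nth {V} (adj : V -> V -> Prop) K l d : chain adj K l ->
  forall i, (S i < length l)%nat -> near adj K (nth i l d) (nth (S i) l d).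
Proof.
  induction 1; intros i Hi; simpl in Hi. lia. lia.
  destruct i. simpl; auto. simpl. apply (IHchain i). simpl; lia.
Qed.

Section Ray.
Context {V : Type} (adj : V -> V -> Prop).
Hypothesis adj_sym : forall x y, adj x y -> adj y x.
Hypothesis adj_irr : forall x, ~ adj x x.
Hypothesis nbh : forall v, exists l, forall w, adj v w -> In w l.

Definition oneended (Y : V -> Prop) := forall (K : list V) z z',
  Y z -> ~ In z K -> Y z' -> ~ In z' K ->
  ~ finite_set (cin adj (fun x => Y x /\ ~ In x K) z) ->
  ~ finite_set (cin adj (fun x => Y x /\ ~ In x K) z') ->
  cin adj (fun x => Y x /\ ~ In x K) z z'.

Variable Y : V -> Prop.
Hypothesis Yone : oneended Y.
Variable y0 : V.

Definition Zs L := fun x => Y x /\ ~ In x L.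
Definition Inv L u := NoDup L /\ chain adj 3 (L ++ [u]) /\ (forall x, In x L -> Y x) /\ Zs L u /\
  (forall x y, Zs L x -> Zs L y -> cin adj (Zs L) x y) /\ ~ finite_set (Zs L).

Lemma ray_step L u n : Inv L u -> exists E u', Inv (L ++ E) u' /\ (exists E0, E = u :: E0) /\
  (forall t, near adj n y0 t -> Y t -> In t (L ++ E)).
Proof.
  intros [ND [Ch [LY [Zu [Zc Zi]]]]].
  set (Z := Zs L) in *.
  destruct (ball_fin adj nbh y0 n) as [lt Hlt].
  destruct (fin_max lt (fun t N => Z t -> exists m, (m <= N)%nat /\ walk (rP adj Z) u t m)) as [N HN].
  { intros a k k' Hk H Za. destruct (H Za) as [m [? ?]]. exists m; split; auto; lia. }
  { intros a _. destruct (classic (Z a)) as [Za|Za].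
    - destruct (Zc u a Zu Za) as [m W]. exists m. intros _; eauto.
    - exists 0%nat; intros; contradiction. }
  set (F0 := fun x => exists m, (m <= N)%nat /\ walk (rP adj Z) u x m).
  assert (F0Z : forall x, F0 x -> Z x).
  { intros x [m [_ W]]. eapply cin_end. exists m; eauto. auto. }
  destruct (fin_exact F0) as [l0 [ND0 Hl0]].
  { eapply fin_sub. apply (ball_fin adj nbh u N). intros x [m [? W]]. exists m; split; auto.
    eapply walk_mono; [|exact W]. intros a b [? [? ?]]; auto. }
  assert (Ul0 : In u l0). { apply Hl0. exists 0%nat; split. lia. constructor. }
  set (X := fun x => Z x /\ ~ In x l0).
  assert (Xinf : ~ finite_set X) by (apply inf_minus_list; auto).
  destruct (comps_inf adj adj_sym nbh Z Zc l0 u Zu Ul0 X (fun x H => H) Xinf) as [a [Xa Ainf]].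
  set (Fs := fun x => Z x /\ ~ cin adj X a x).
  assert (XE : forall x, X x <-> (Y x /\ ~ In x (L ++ l0))).
  { intros x. unfold X, Z, Zs. rewrite in_app_iff. tauto. }
  assert (Fsfin : finite_set Fs).
  { eapply fin_sub. apply fin_or. apply (fin_list l0). apply (comps_finpart adj adj_sym nbh Z Zc l0 u Zu Ul0).
    intros x [Zx Nx]. destruct (classic (In x l0)); auto. right. split. split; auto.
    apply NNPP; intro Hinf. apply Nx. apply cin_sym; auto.
    assert (Hx : X x) by (split; auto).
    pose proof (proj1 (XE x) Hx). pose proof (proj1 (XE a) Xa).
    eapply cin_ext; [|apply (Yone (L ++ l0) x a)].
    all: try tauto.
    all: try (intros z Hz; apply XE; auto; fail).
    all: intro HF; try first [ apply Hinf; eapply fin_sub; [exact HF|]; intros z Hz; eapply cin_ext; [|exact Hz]; intros; apply XE; auto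
                         | apply Ainf; eapply fin_sub; [exact HF|]; intros z Hz; eapply cin_ext; [|exact Hz]; intros; apply XE; auto]. }
  assert (F0Fs : forall x, F0 x -> Fs x).
  { intros x Fx. split; auto. intros C. assert (X x). eapply cin_end; eauto. destruct H. apply H0, Hl0; auto. }
  assert (Fsu : forall x, F0 x -> cin adj Fs u x).
  { intros x [m [Hm W]]. exists m. eapply walk_mono; [|apply (walk_pts _ _ _ _ W F0)].
    - intros p q [[? [? ?]] [? ?]]. split; auto.
    - intros z k Hk Wk. exists k; split; auto; lia. }
  assert (Fsconn : forall x, Fs x -> cin adj Fs u x).
  { intros x Fx. destruct (classic (In x l0)) as [Il|Il]. apply Fsu, Hl0; auto.
    destruct Fx as [Zx Nx].
    destruct (comps_exit adj Z Zc l0 u Zu Ul0 x (conj Zx Il)) as [p [q [C [Xp [Zq [Iq A]]]]]].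
    assert (Fsp : Fs p). { split. apply Xp. intro C'. apply Nx. eapply cin_trans; eauto. apply cin_sym; auto. }
    eapply cin_trans. apply Fsu, Hl0, Iq. eapply cin_trans. apply cin_step. apply F0Fs, Hl0, Iq. apply Fsp. apply adj_sym; auto.
    apply cin_sym; auto. eapply cin_ext; [|apply (cin_restrict adj X Fs x p C)].
    intros z [_ H]; auto. intros z Cz. assert (Xz : X z) by (eapply cin_end; [exact Cz|]; split; auto).
    split. apply Xz.
    intro C'. apply Nx. eapply cin_trans; [exact C'|]. apply cin_sym; auto. }
  assert (Fsu' : Fs u) by (apply F0Fs, Hl0; auto).
  assert (ZaX : forall z, cin adj X a z -> X z) by (intros; eapply cin_end; eauto).
  destruct (Zc u a Zu (proj1 Xa)) as [m Wua].
  destruct (walk_cross _ (cin adj X a) _ _ _ Wua) as [w [u' [[Zw [Zu' A]] [Nw Cu']]]].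
  { intro C. apply ZaX in C. destruct C. apply H0; auto. }
  apply cin_refl.
  destruct Fsfin as [lf Hlf].
  destruct (enum2 adj adj_sym (length lf) Fs u w) as [E [NE [ME [[E0 HE0] [ChE [E1 [e [HE1 Ne]]]]]]]].
  exists lf; auto. auto. split; auto. auto.
  assert (EZ : forall x, In x E -> Z x) by (intros x Hx; apply ME in Hx; apply Hx).
  assert (ZE : forall x, Zs (L ++ E) x <-> cin adj X a x).
  { intros x. unfold Zs. rewrite in_app_iff. split.
    - intros [Yx Nx]. apply NNPP; intro C. apply Nx. right. apply ME. split; [|exact C]. split; auto.
    - intros C. destruct (ZaX _ C) as [[Yx NL] _]. split; auto. intros [?|I]; auto. apply ME in I.
      destruct I; contradiction. }
  exists E, u'. split; [|split].
  - split; [|split; [|split; [|split; [|split]]]].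
    + apply NoDup_app; auto. intros x I1 I2. apply EZ in I2. destruct I2; contradiction.
    + rewrite <- app_assoc. rewrite HE0. simpl. apply chain_glue; auto. change (u :: E0 ++ [u']) with ((u :: E0) ++ [u']). rewrite <- HE0, HE1, <- app_assoc.
      simpl. apply chain_app. rewrite <- HE1; auto. constructor.
      apply near_mono with (1 + 1)%nat. lia. eapply near_trans; eauto. apply near_adj; auto.
    + intros x I. apply in_app_or in I. destruct I as [I|I]; auto. apply EZ in I; apply I.
    + apply ZE; auto.
    + intros x y Hx Hy. apply ZE in Hx; apply ZE in Hy.
      eapply cin_ext; [|apply (cin_restrict adj X (cin adj X a) x y)].
      intros z [_ Hz]; apply ZE; auto. eapply cin_trans; [apply cin_sym|]; [auto|exact Hx|exact Hy].
      intros z Hz. exact (cin_trans adj X a x z Hx Hz).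
    + intros HF. apply Ainf. eapply fin_sub; eauto. intros; apply ZE; auto.
  - eauto.
  - intros t Nt Yt. rewrite in_app_iff. destruct (classic (In t L)); auto. right.
    apply ME. apply F0Fs. assert (Zt : Z t) by (split; auto).
    destruct (HN t (Hlt t Nt) Zt) as [k [? ?]]. exists k; auto.
Qed.

Hypothesis Yconn : forall x y, Y x -> Y y -> cin adj Y x y.
Hypothesis Yinf : ~ finite_set Y.
Hypothesis Yy0 : Y y0.

Lemma ray_nxt n (s : list V * V) : exists s' : list V * V, Inv (fst s) (snd s) ->
  (Inv (fst s') (snd s') /\ (exists E0, fst s' = fst s ++ snd s :: E0) /\
   forall t, near adj n y0 t -> Y t -> In t (fst s')).
Proof.
  destruct (classic (Inv (fst s) (snd s))) as [I|I].
  - destruct (ray_step (fst s) (snd s) n I) as [E [u' [I' [[E0 HE] C]]]].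
    exists (fst s ++ E, u'). intros _. simpl. split; auto. split; auto. exists E0; subst; auto.
  - exists s; intros; contradiction.
Qed.

Definition rnxt n s := proj1_sig (constructive_indefinite_description _ (ray_nxt n s)).
Fixpoint rst k := match k with O => ([], y0) | S k => rnxt k (rst k) end.
Definition RL k := fst (rst k).

Lemma rst_inv k : Inv (RL k) (snd (rst k)).
Proof.
  induction k.
  - unfold RL; simpl. split; [constructor|split; [constructor|split; [intros _ []|split]]].
    split; auto. split. intros x y Hx Hy. eapply cin_ext; [|apply Yconn; apply Hx || apply Hy].
    intros z Hz; split; auto.
    intro HF; apply Yinf; eapply fin_sub; eauto. intros x Hx; split; auto.
  - unfold RL in *; simpl. unfold rnxt. destruct constructive_indefinite_description as [s' H]; simpl.
    apply H; auto.
Qed.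

Lemma rst_ext k : exists E0, RL (S k) = RL k ++ snd (rst k) :: E0.
Proof.
  unfold RL; simpl. unfold rnxt. destruct constructive_indefinite_description as [s' H]; simpl.
  apply H, rst_inv.
Qed.

Lemma rst_cov k t : near adj k y0 t -> Y t -> In t (RL (S k)).
Proof.
  unfold RL; simpl. unfold rnxt. destruct constructive_indefinite_description as [s' H]; simpl.
  apply H, rst_inv.
Qed.

Lemma rst_len k : (k <= length (RL k))%nat.
Proof.
  induction k. lia. destruct (rst_ext k) as [E0 H]. rewrite H, length_app. simpl. lia.
Qed.

Lemma rst_pre k d : exists M, RL (d + k) = RL k ++ M.
Proof.
  induction d. exists []; simpl; rewrite app_nil_r; auto.
  destruct IHd as [M HM]. destruct (rst_ext (d + k)) as [E0 H]. simpl. rewrite H, HM.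
  eexists. rewrite <- app_assoc. eauto.
Qed.

Definition Rr i := nth i (RL (S i)) y0.

Lemma Rr_nth k i : (i < length (RL k))%nat -> nth i (RL k) y0 = Rr i.
Proof.
  intros Hi. unfold Rr. destruct (Nat.le_ge_cases k (S i)).
  - destruct (rst_pre k (S i - k)) as [M HM]. replace (S i - k + k)%nat with (S i) in HM by lia.
    rewrite HM, app_nth1; auto.
  - destruct (rst_pre (S i) (k - S i)) as [M HM]. replace (k - S i + S i)%nat with k in HM by lia.
    rewrite HM, app_nth1; auto. pose proof (rst_len (S i)); lia.
Qed.

Lemma ray_exists : exists R : nat -> V, R 0%nat = y0 /\ (forall i j, R i = R j -> i = j) /\
  (forall x, Y x <-> exists i, R i = x) /\ (forall i, near adj 3 (R i) (R (S i))).
Proof.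
  exists Rr. split; [|split; [|split]].
  - unfold Rr. destruct (rst_ext 0) as [E0 H]. rewrite H. simpl. auto.
  - intros i j E. set (k := S (Nat.max i j)). pose proof (rst_len k).
    destruct (rst_inv k) as [ND _].
    rewrite <- (Rr_nth k i), <- (Rr_nth k j) in E by lia.
    eapply NoDup_nth; eauto; lia.
  - intros x; split.
    + intros Yx. destruct (Yconn y0 x Yy0 Yx) as [n W].
      assert (I : In x (RL (S n))). { apply rst_cov; auto. exists n; split; auto.
        eapply walk_mono; [|exact W]. intros a b [? [? ?]]; auto. }
      destruct (In_nth _ _ y0 I) as [i [Hi Ei]]. exists i. rewrite <- Ei. symmetry; apply Rr_nth; auto.
    + intros [i <-]. destruct (rst_inv (S i)) as [_ [_ [LY _]]]. apply LY. unfold Rr. apply nth_In.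
      pose proof (rst_len (S i)); lia.
  - intros i. set (k := S (S i)). pose proof (rst_len k).
    rewrite <- (Rr_nth k i), <- (Rr_nth k (S i)) by lia.
    destruct (rst_inv k) as [_ [Ch _]].
    pose proof (chain_nth adj 3 _ y0 Ch i) as Hc. rewrite !app_nth1 in Hc by lia. apply Hc.
    rewrite length_app; simpl; lia.
Qed.

End Ray.

Lemma min_exists (Q : nat -> Prop) : (exists n, Q n) -> exists m, Q m /\ forall k, Q k -> (m <= k)%nat.
Proof.
  intros [n Hn]. revert Hn. induction n using (well_founded_induction lt_wf). intros Hn.
  destruct (classic (exists k, Q k /\ (k < n)%nat)) as [[k [Qk Hk]]|Hno].
  - eapply H; eauto.
  - exists n; split; auto. intros k Qk. destruct (Nat.lt_ge_cases k n); auto. exfalso; eauto.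
Qed.

Section Main.
Context {V : Type} (adj : V -> V -> Prop).
Hypothesis adj_sym : forall x y, adj x y -> adj y x.
Hypothesis adj_irr : forall x, ~ adj x x.
Hypothesis nbh : forall v, exists l, forall w, adj v w -> In w l.

Lemma ham_to_W (P : Z -> V) : bijective_map P -> (forall i, near adj 6 (P i) (P (i + 1)%Z)) ->
  exists (W : Type) (adjW : W -> W -> Prop),
      simple_graph adjW /\ bilipschitz_equiv adj adjW /\
      exists P : Z -> W, biinf_hamiltonian_path adjW P.
Proof.
  intros [Pinj Psurj] HP.
  set (adjW := fun x y : V => x <> y /\ near adj 6 x y).
  assert (Wk : forall x y m, walk adjW x y m -> exists k, (k <= 6 * m)%nat /\ walk adj x y k).
  { induction 1. exists 0%nat; split; auto; constructor.
    destruct H as [_ [k1 [Hk1 W1]]]. destruct IHwalk as [k2 [Hk2 W2]].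
    exists (k1 + k2)%nat; split. lia. eapply walk_app; eauto. }
  exists V, adjW. split; [|split].
  - split. intros x y [? ?]; split; auto. apply near_sym; auto.
    intros x [? _]; auto.
  - exists (fun x => x), 6%R. split. split; auto. intros w; exists w; auto.
    split. lra. intros x y n [Wn Mn].
    destruct (min_exists (fun m => walk adjW x y m)) as [m [Wm Mm]].
    { exists n. eapply walk_mono; [|exact Wn]. intros a b A; split.
      intro; subst; eapply adj_irr; eauto. apply near_mono with 1%nat. lia. apply near_adj; auto. }
    exists m. split. split; auto.
    assert (m <= n)%nat. { apply Mm. eapply walk_mono; [|exact Wn]. intros a b A; split.
      intro; subst; eapply adj_irr; eauto. apply near_mono with 1%nat. lia. apply near_adj; auto. }
    destruct (Wk _ _ _ Wm) as [k [Hk Wk']]. pose proof (Mn k Wk').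
    apply le_INR in H. assert (INR n <= INR (6 * m))%R by (apply le_INR; lia).
    rewrite mult_INR in H1. simpl in H1. 
    pose proof (pos_INR n). split.
    + unfold Rdiv. replace (INR (S (S (S (S (S 1)))))) with 6%R in H1 by (simpl; lra). lra.
    + lra.
  - exists P. split. split; auto. intros i. split.
    + intro E. apply Pinj in E. lia.
    + apply HP.
Qed.

End Main.

Section Ends.
Context {V : Type} (adj : V -> V -> Prop).
Hypothesis adj_sym : forall x y, adj x y -> adj y x.
Hypothesis adj_irr : forall x, ~ adj x x.
Hypothesis nbh : forall v, exists l, forall w, adj v w -> In w l.
Hypothesis Gends : at_most_two_ends adj.

Lemma vends (K : list V) x1 x2 x3 : ~ In x1 K -> ~ In x2 K -> ~ In x3 K ->
  ~ finite_set (cin adj (fun x => ~ In x K) x1) ->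
  ~ finite_set (cin adj (fun x => ~ In x K) x2) ->
  ~ finite_set (cin adj (fun x => ~ In x K) x3) ->
  cin adj (fun x => ~ In x K) x1 x2 \/ cin adj (fun x => ~ In x K) x1 x3 \/
  cin adj (fun x => ~ In x K) x2 x3.
Proof.
  set (A := flat_map (fun k => map (fun z => (k, z)) (nb adj nbh k)) K).
  set (R := remove_edges adj A).
  assert (HA : forall a b, In (a, b) A -> In a K).
  { intros a b H. apply in_flat_map in H. destruct H as [k [Hk H]]. apply in_map_iff in H.
    destruct H as [z [E _]]. inversion E; subst; auto. }
  assert (E1 : forall x y n, walk R x y n -> ~ In x K -> walk (rP adj (fun x => ~ In x K)) x y n).
  { induction 1; intros Hx. constructor. destruct H as [A1 [A2 A3]].
    assert (Hy : ~ In y K).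
    { intro Iy. apply A3. apply in_flat_map. exists y; split; auto. apply in_map. apply nb_spec; auto. }
    apply walk_cons with y. split; auto. apply IHwalk; auto. }
  assert (E2 : forall x y n, walk (rP adj (fun x => ~ In x K)) x y n -> walk R x y n).
  { induction 1. constructor. destruct H as [A1 [A2 A3]]. apply walk_cons with y; auto.
    split; auto. split; intro I; apply HA in I; contradiction. }
  assert (Eq : forall x, ~ In x K -> forall y, conn R x y <-> cin adj (fun x => ~ In x K) x y).
  { intros x Hx y; split; intros [n W]; exists n; eauto. }
  assert (Inf : forall x, ~ In x K -> ~ finite_set (cin adj (fun x => ~ In x K) x) -> infinite_component R x).
  { intros x Hx HI HF. apply HI. eapply fin_sub; eauto. intros y Hy; apply Eq; auto. }
  intros I1 I2 I3 F1 F2 F3.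
  destruct (Gends A x1 x2 x3) as [H|[H|H]]; auto.
  - left; apply Eq; auto.
  - right; left; apply Eq; auto.
  - right; right; apply Eq; auto.
Qed.

End Ends.

Section Inter.
Context {V : Type} (adj : V -> V -> Prop).
Hypothesis adj_sym : forall x y, adj x y -> adj y x.

Lemma near_seq (R : nat -> V) : (forall i, near adj 3 (R i) (R (S i))) ->
  forall a d, near adj (3 * d) (R a) (R (d + a)%nat).
Proof.
  intros HR a d. induction d. simpl. apply near_mono with 0%nat. lia. apply near_refl.
  replace (3 * S d)%nat with (3 * d + 3)%nat by lia. eapply near_trans; [exact IHd|]. apply HR.
Qed.

Definition idx (z : Z) : nat := if (0 <=? z)%Z then (2 * Z.to_nat z)%nat else (2 * Z.to_nat (- z) - 1)%nat.

Lemma idx_inj z1 z2 : idx z1 = idx z2 -> z1 = z2.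
Proof.
  unfold idx. destruct (Z.leb_spec 0 z1), (Z.leb_spec 0 z2); intros; lia.
Qed.

Lemma idx_surj i : exists z, idx z = i.
Proof.
  destruct (Nat.Even_or_Odd i) as [[k Hk]|[k Hk]].
  - exists (Z.of_nat k). unfold idx. destruct (Z.leb_spec 0 (Z.of_nat k)); lia.
  - exists (- Z.of_nat (S k))%Z. unfold idx. destruct (Z.leb_spec 0 (- Z.of_nat (S k))); lia.
Qed.

Lemma interleave (R : nat -> V) : (forall i j, R i = R j -> i = j) -> (forall x, exists i, R i = x) ->
  (forall i, near adj 3 (R i) (R (S i))) ->
  exists P : Z -> V, bijective_map P /\ forall i, near adj 6 (P i) (P (i + 1)%Z).
Proof.
  intros Ri Rs HR. exists (fun z => R (idx z)). split; [split|].
  - intros z1 z2 E. apply idx_inj, Ri, E.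
  - intros w. destruct (Rs w) as [i <-]. destruct (idx_surj i) as [z <-]. eauto.
  - intros z. unfold idx. destruct (Z.leb_spec 0 z), (Z.leb_spec 0 (z + 1)).
    + replace (2 * Z.to_nat (z + 1))%nat with (2 + 2 * Z.to_nat z)%nat by lia.
      apply (near_seq R HR _ 2).
    + lia.
    + assert (z = -1)%Z by lia. subst. simpl. apply near_sym; auto.
      apply near_mono with 3%nat. lia. apply HR.
    + replace (2 * Z.to_nat (- z) - 1)%nat with (2 + (2 * Z.to_nat (- (z + 1)) - 1))%nat by lia.
      apply near_sym; auto. apply (near_seq R HR _ 2).
Qed.

End Inter.

Section Two.
Context {V : Type} (adj : V -> V -> Prop).
Hypothesis adj_sym : forall x y, adj x y -> adj y x.
Hypothesis adj_irr : forall x, ~ adj x x.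
Hypothesis nbh : forall v, exists l, forall w, adj v w -> In w l.
Hypothesis Gconn : connected_graph adj.
Hypothesis Gends : at_most_two_ends adj.

Definition Tc : V -> Prop := fun _ => True.
Lemma Tconn : forall x y, Tc x -> Tc y -> cin adj Tc x y.
Proof. intros x y _ _. destruct (Gconn x y) as [n W]. exists n. eapply walk_mono; [|exact W].
  intros a b A; split; [|split]; auto; constructor. Qed.

Lemma cin_TN l x y : cin adj (fun v => Tc v /\ ~ In v l) x y <-> cin adj (fun v => ~ In v l) x y.
Proof. split; apply cin_ext; unfold Tc; tauto. Qed.

Lemma fin_TN l x : finite_set (cin adj (fun v => Tc v /\ ~ In v l) x) <-> finite_set (cin adj (fun v => ~ In v l) x).
Proof. split; intro H; eapply fin_sub; eauto; intros; apply cin_TN; auto. Qed.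

Section Side.
Variable Kc : list V.
Variable z : V.
Hypothesis zKc : In z Kc.
Let X := fun v => Tc v /\ ~ In v Kc.

Lemma side_one a b : X a -> X b -> ~ cin adj X a b -> ~ finite_set (cin adj X b) -> oneended adj (cin adj X a).
Proof.
  intros Xa Xb nab Ib K' x x' Yx Nx Yx' Nx' Ix Ix'.
  set (X2 := fun v => ~ In v (Kc ++ K')).
  assert (XaX : forall v, cin adj X a v -> X v) by (intros; eapply cin_end; eauto).
  assert (Conv : forall x, cin adj X a x -> ~ In x K' -> forall y,
      cin adj (fun v => cin adj X a v /\ ~ In v K') x y <-> cin adj X2 x y).
  { intros x0 Y0 N0 y; split; intro H.
    - eapply cin_ext; [|exact H]. intros v [Yv Nv]. unfold X2. rewrite in_app_iff.
      destruct (XaX v Yv). tauto.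
    - eapply cin_ext; [|apply (cin_restrict adj X2 (cin adj X a) x0 y H)].
      + intros v [Hv Yv]. split; auto. intro; apply Hv; apply in_or_app; auto.
      + intros v Hv. eapply cin_trans; [exact Y0|]. eapply cin_ext; [|exact Hv].
        intros w Hw. split. constructor. intro; apply Hw; apply in_or_app; auto. }
  assert (IC : forall x, cin adj X a x -> ~ In x K' ->
     ~ finite_set (cin adj (fun v => cin adj X a v /\ ~ In v K') x) -> ~ finite_set (cin adj X2 x)).
  { intros x0 Y0 N0 I0 HF. apply I0. eapply fin_sub; [exact HF|]. intros y Hy. apply Conv; auto. }
  destruct (comps_inf adj adj_sym nbh Tc Tconn (Kc ++ K') z I (in_or_app _ _ _ (or_introl zKc))
     (fun v => cin adj X b v /\ ~ In v K')) as [b3 [[Yb3 Nb3] Ib3]].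
  { intros v [Yv Nv]. split. constructor. rewrite in_app_iff. assert (X v) by (eapply cin_end; eauto).
    destruct H; tauto. }
  { apply inf_minus_list; auto. }
  assert (Nx2 : ~ In x (Kc ++ K')). { rewrite in_app_iff. destruct (XaX x Yx). tauto. }
  assert (Nx2' : ~ In x' (Kc ++ K')). { rewrite in_app_iff. destruct (XaX x' Yx'). tauto. }
  assert (Nb2 : ~ In b3 (Kc ++ K')). { rewrite in_app_iff. assert (X b3) by (eapply cin_end; eauto). destruct H; tauto. }
  assert (Hb : forall y, cin adj X a y -> cin adj X2 y b3 -> False).
  { intros y Yy C. apply nab. eapply cin_trans; [exact Yy|]. eapply cin_trans.
    eapply cin_ext; [|exact C]. intros w Hw. split. constructor. intro; apply Hw; apply in_or_app; auto.
    apply cin_sym; auto. }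
  destruct (vends adj adj_sym nbh Gends (Kc ++ K') x x' b3) as [C|[C|C]]; auto.
  - intro HF; apply Ib3, (proj2 (fin_TN _ _)), HF.
  - apply Conv; auto.
  - exfalso; eapply Hb; [exact Yx|exact C].
  - exfalso; eapply Hb; [exact Yx'|exact C].
Qed.

End Side.

Lemma two_ended (K : list V) z z' : ~ In z K -> ~ In z' K ->
  ~ finite_set (cin adj (fun x => Tc x /\ ~ In x K) z) ->
  ~ finite_set (cin adj (fun x => Tc x /\ ~ In x K) z') ->
  ~ cin adj (fun x => Tc x /\ ~ In x K) z z' ->
  exists P : Z -> V, bijective_map P /\ forall i, near adj 3 (P i) (P (i + 1)%Z).
Proof.
  intros Nz Nz' Iz Iz' Czz.
  destruct (fin_max K (fun k N => near adj N z k)) as [N HN].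
  { intros; eapply near_mono; eauto. }
  { intros k _. destruct (Gconn z k) as [n W]. exists n. exists n; auto. }
  destruct (fin_exact (near adj N z) (ball_fin adj nbh z N)) as [Kc [_ HKc]].
  assert (zKc : In z Kc) by (apply HKc, near_mono with 0%nat; [lia|apply near_refl]).
  assert (KK : forall k, In k K -> In k Kc) by (intros; apply HKc; auto).
  set (X := fun v => Tc v /\ ~ In v Kc).
  assert (cXK : forall x y, cin adj X x y -> cin adj (fun v => Tc v /\ ~ In v K) x y).
  { intros x y; apply cin_ext. intros v [? Hv]; split; auto. }
  assert (Q1inf : ~ finite_set (fun v => X v /\ cin adj (fun v => Tc v /\ ~ In v K) z v)).
  { intro HF; apply (inf_minus_list _ Kc Iz); eapply fin_sub; [exact HF|].
    intros v [C Nv]; split; [split; [constructor|auto]|auto]. }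
  assert (Q2inf : ~ finite_set (fun v => X v /\ cin adj (fun v => Tc v /\ ~ In v K) z' v)).
  { intro HF; apply (inf_minus_list _ Kc Iz'); eapply fin_sub; [exact HF|].
    intros v [C Nv]; split; [split; [constructor|auto]|auto]. }
  destruct (comps_inf adj adj_sym nbh Tc Tconn Kc z I zKc _ (fun v H => proj1 H) Q1inf) as [a1 [[Xa1 Ca1] Ia1]].
  destruct (comps_inf adj adj_sym nbh Tc Tconn Kc z I zKc _ (fun v H => proj1 H) Q2inf) as [a2 [[Xa2 Ca2] Ia2]].
  fold X in Ia1, Ia2.
  assert (nab : ~ cin adj X a1 a2).
  { intro C. apply Czz. eapply cin_trans; [exact Ca1|]. eapply cin_trans; [apply cXK, C|].
    apply cin_sym; auto. }
  set (Y1 := cin adj X a1). set (Y2 := cin adj X a2).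
  assert (XY1 : forall v, Y1 v -> X v) by (intros; eapply cin_end; eauto).
  assert (XY2 : forall v, Y2 v -> X v) by (intros; eapply cin_end; eauto).
  assert (Y12 : forall v, Y1 v -> Y2 v -> False).
  { intros v H1 H2. apply nab. eapply cin_trans; [exact H1|]. apply cin_sym; auto. }
  set (Fm := fun v => ~ Y1 v /\ ~ Y2 v).
  assert (KcFm : forall v, In v Kc -> Fm v).
  { intros v Iv. split; intro H; [apply XY1 in H|apply XY2 in H]; destruct H; contradiction. }
  assert (FmC : forall v w, Fm v -> cin adj X v w -> Fm w).
  { intros v w [F1 F2] C. split; intro H; [apply F1|apply F2]; eapply cin_trans; eauto; apply cin_sym; auto. }
  assert (Fmfin : finite_set Fm).
  { eapply fin_sub. apply fin_or. apply (fin_list Kc). apply (comps_finpart adj adj_sym nbh Tc Tconn Kc z I zKc).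
    intros v Fv. destruct (classic (In v Kc)) as [Iv|Nv]; auto. right. split. split; auto. constructor.
    apply NNPP; intro Iv.
    destruct (vends adj adj_sym nbh Gends Kc v a1 a2) as [C|[C|C]]; auto.
    - apply Xa1. - apply Xa2.
    - intro HF; apply Iv, (proj2 (fin_TN _ _)), HF.
    - intro HF; apply Ia1, (proj2 (fin_TN _ _)), HF.
    - intro HF; apply Ia2, (proj2 (fin_TN _ _)), HF.
    - apply (proj1 Fv). apply cin_sym; auto. apply cin_TN; auto.
    - apply (proj2 Fv). apply cin_sym; auto. apply cin_TN; auto.
    - apply nab. apply cin_TN; auto. }
  assert (FmK : forall v, In v Kc -> cin adj Fm z v).
  { intros v Iv. apply HKc in Iv. destruct Iv as [m [Hm W]]. exists m.
    eapply walk_mono; [|apply (walk_pts _ _ _ _ W (fun y => In y Kc))].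
    - intros p q [A [P1 P2]]. split; [|split]; auto.
    - intros y k Hk Wk. apply HKc. exists k; split; auto; lia. }
  assert (Fmconn : forall v, Fm v -> cin adj Fm z v).
  { intros v Fv. destruct (classic (In v Kc)) as [Iv|Nv]; auto.
    destruct (comps_exit adj Tc Tconn Kc z I zKc v (conj I Nv)) as [p [q [C [Xp [_ [Iq A]]]]]].
    eapply cin_trans. apply (FmK q Iq). eapply cin_trans. apply cin_step. apply KcFm; auto.
    apply (FmC v p Fv C). apply adj_sym; auto.
    apply cin_sym; auto. eapply cin_ext; [|apply (cin_restrict adj X Fm v p C)].
    intros w [_ H]; auto. intros w Hw. apply (FmC v w Fv Hw). }
  destruct (comps_exit adj Tc Tconn Kc z I zKc a2 Xa2) as [p2 [q2 [C2 [Xp2 [_ [Iq2 A2]]]]]].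
  destruct (comps_exit adj Tc Tconn Kc z I zKc a1 Xa1) as [p1 [q1 [C1 [Xp1 [_ [Iq1 A1]]]]]].
  destruct Fmfin as [lf Hlf].
  destruct (enum2 adj adj_sym (length lf) Fm q2 q1) as [E [NE [ME [[E0 HE0] [ChE [E1 [e [HE1 Ne]]]]]]]].
  { exists lf; auto. } { apply KcFm; auto. } { apply KcFm; auto. }
  { intros v Fv. eapply cin_trans; [apply cin_sym; auto; apply Fmconn, KcFm; auto|]. apply Fmconn; auto. }
  assert (Yconn : forall a, forall x y, cin adj X a x -> cin adj X a y -> cin adj (cin adj X a) x y).
  { intros a x y Hx Hy. eapply cin_ext; [|apply (cin_restrict adj X (cin adj X a) x y)].
    intros w [_ H]; auto. eapply cin_trans; [apply cin_sym|]; [auto|exact Hx|exact Hy].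
    intros w Hw. eapply cin_trans; [exact Hx|exact Hw]. }
  destruct (ray_exists adj adj_sym nbh Y1 (side_one Kc z zKc a1 a2 Xa1 Xa2 nab Ia2) p1) as [R1 [R10 [R1i [R1s R1n]]]].
  { intros x y; apply Yconn. } { exact Ia1. } { exact C1. }
  assert (nba : ~ cin adj X a2 a1) by (intro C; apply nab; apply cin_sym; auto).
  destruct (ray_exists adj adj_sym nbh Y2 (side_one Kc z zKc a2 a1 Xa2 Xa1 nba Ia1) p2) as [R2 [R20 [R2i [R2s R2n]]]].
  { intros x y; apply Yconn. } { exact Ia2. } { exact C2. }
  set (m := length E).
  assert (m1 : (1 <= m)%nat) by (unfold m; rewrite HE0; simpl; lia).
  set (P := fun i : Z => if (i <? 0)%Z then R2 (Z.to_nat (- i - 1)) else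
           if (i <? Z.of_nat m)%Z then nth (Z.to_nat i) E p1 else R1 (Z.to_nat i - m)%nat).
  assert (PY2 : forall i, (i < 0)%Z -> P i = R2 (Z.to_nat (- i - 1))).
  { intros i Hi; unfold P. destruct (Z.ltb_spec i 0); [auto|lia]. }
  assert (PE : forall i, (0 <= i)%Z -> (i < Z.of_nat m)%Z -> P i = nth (Z.to_nat i) E p1).
  { intros i H0 H1; unfold P. destruct (Z.ltb_spec i 0); [lia|]. destruct (Z.ltb_spec i (Z.of_nat m)); [auto|lia]. }
  assert (PY1 : forall i, (Z.of_nat m <= i)%Z -> P i = R1 (Z.to_nat i - m)%nat).
  { intros i Hi; unfold P. destruct (Z.ltb_spec i 0); [lia|]. destruct (Z.ltb_spec i (Z.of_nat m)); [lia|auto]. }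
  assert (InE : forall k, (k < m)%nat -> Fm (nth k E p1)) by (intros; apply ME, nth_In; auto).
  assert (InY1 : forall k, Y1 (R1 k)) by (intros; apply R1s; eauto).
  assert (InY2 : forall k, Y2 (R2 k)) by (intros; apply R2s; eauto).
  exists P. split; [split|].
  - intros i j Eij.
    destruct (Z.lt_ge_cases i 0) as [Hi|Hi]; [|destruct (Z.lt_ge_cases i (Z.of_nat m)) as [Hi'|Hi']];
    (destruct (Z.lt_ge_cases j 0) as [Hj|Hj]; [|destruct (Z.lt_ge_cases j (Z.of_nat m)) as [Hj'|Hj']]);
    repeat first [rewrite PY2 in Eij by lia | rewrite PY1 in Eij by lia | rewrite PE in Eij by lia].
    + apply R2i in Eij; lia.
    + exfalso. apply (proj2 (InE (Z.to_nat j) ltac:(lia))). rewrite <- Eij; auto.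
    + exfalso. apply (Y12 (R2 (Z.to_nat (- i - 1)))); auto. rewrite Eij; auto.
    + exfalso. apply (proj2 (InE (Z.to_nat i) ltac:(lia))). rewrite Eij; auto.
    + apply (proj1 (NoDup_nth E p1)) in Eij; auto; lia.
    + exfalso. apply (proj1 (InE (Z.to_nat i) ltac:(lia))). rewrite Eij; auto.
    + exfalso. apply (Y12 (R2 (Z.to_nat (- j - 1)))); auto. rewrite <- Eij; auto.
    + exfalso. apply (proj1 (InE (Z.to_nat j) ltac:(lia))). rewrite <- Eij; auto.
    + apply R1i in Eij; lia.
  - intros w. destruct (classic (Y1 w)) as [H1|H1].
    { apply R1s in H1. destruct H1 as [k <-]. exists (Z.of_nat (k + m)). rewrite PY1 by lia. f_equal; lia. }
    destruct (classic (Y2 w)) as [H2|H2].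
    { apply R2s in H2. destruct H2 as [k <-]. exists (- Z.of_nat (S k))%Z. rewrite PY2 by lia. f_equal; lia. }
    assert (Iw : In w E) by (apply ME; split; auto).
    destruct (In_nth _ _ p1 Iw) as [k [Hk <-]]. exists (Z.of_nat k). rewrite PE by lia. f_equal; lia.
  - intros i.
    destruct (Z.lt_ge_cases (i + 1) 0) as [Hi|Hi].
    { rewrite !PY2 by lia. replace (Z.to_nat (- i - 1)) with (S (Z.to_nat (- (i + 1) - 1))) by lia.
      apply near_sym; auto. }
    destruct (Z.eq_dec i (-1)) as [->|Hn1].
    { rewrite PY2, PE by lia. simpl. rewrite R20, HE0. simpl. apply near_mono with 1%nat. lia.
      apply near_adj; auto. }
    destruct (Z.lt_ge_cases (i + 1) (Z.of_nat m)) as [Hm|Hm].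
    { rewrite !PE by lia. replace (Z.to_nat (i + 1)) with (S (Z.to_nat i)) by lia.
      apply chain_nth; auto. lia. }
    destruct (Z.eq_dec (i + 1) (Z.of_nat m)) as [Em|Em].
    { rewrite PE, PY1 by lia. replace (Z.to_nat (i + 1) - m)%nat with 0%nat by lia. rewrite R10.
      assert (nth (Z.to_nat i) E p1 = e).
      { rewrite HE1. assert (length E1 = Z.to_nat i). { assert (length E = m) by auto. rewrite HE1, length_app in H.
          simpl in H. lia. }
        rewrite <- H. rewrite app_nth2 by lia. rewrite Nat.sub_diag; auto. }
      rewrite H. apply near_mono with (1 + 1)%nat. lia. eapply near_trans; [exact Ne|].
      apply near_adj; auto. }
    rewrite !PY1 by lia. replace (Z.to_nat (i + 1) - m)%nat with (S (Z.to_nat i - m)) by lia. auto.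
Qed.

End Two.

Section Fwd.
Context {V : Type} (adj : V -> V -> Prop).
Hypothesis adj_sym : forall x y, adj x y -> adj y x.
Hypothesis nbh : forall v, exists l, forall w, adj v w -> In w l.
Hypothesis Gconn : connected_graph adj.

Lemma avoid_walk (A : list (V * V)) (B : list V) :
  (forall a b, In (a, b) A -> In a B /\ In b B) ->
  forall x y n, walk adj x y n -> (forall z k, (k <= n)%nat -> walk adj x z k -> ~ In z B) ->
  walk (remove_edges adj A) x y n.
Proof.
  intros HAB. induction 1; intros HB. constructor.
  assert (Nx : ~ In x B) by (apply (HB x 0%nat); [lia|constructor]).
  apply walk_cons with y. split; auto. split; intro I; apply HAB in I; destruct I; contradiction.
  apply IHwalk. intros z' k Hk W. apply (HB z' (S k)). lia. econstructor; eauto.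
Qed.

Lemma fwd : (exists (W : Type) (adjW : W -> W -> Prop),
      simple_graph adjW /\ bilipschitz_equiv adj adjW /\
      exists P : Z -> W, biinf_hamiltonian_path adjW P) -> at_most_two_ends adj.
Proof.
  intros [W [adjW [[sWs sWi] [[f [c [[finj fsurj] [cpos Hf]]]] [P [[Pinj Psurj] Padj]]]]]].
  set (g := fun w => proj1_sig (constructive_indefinite_description _ (fsurj w))).
  assert (fg : forall w, f (g w) = w).
  { intros w; unfold g; destruct constructive_indefinite_description; auto. }
  set (Q := fun i => g (P i)).
  assert (Qinj : forall i j, Q i = Q j -> i = j).
  { intros i j E. apply Pinj. rewrite <- (fg (P i)), <- (fg (P j)). unfold Q in E. rewrite E; auto. }
  assert (Qsurj : forall v, exists i, Q i = v).
  { intros v. destruct (Psurj (f v)) as [i Hi]. exists i. apply finj. unfold Q. rewrite fg; auto. }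
  set (M := Z.to_nat (up c)).
  assert (QM : forall i, near adj M (Q i) (Q (i + 1)%Z)).
  { intros i. destruct (min_exists (fun n => walk adj (Q i) (Q (i + 1)%Z) n)) as [n [Wn Mn]].
    apply Gconn.
    destruct (Hf _ _ n (conj Wn Mn)) as [m [[Wm Mm] [H1 H2]]].
    assert (m <= 1)%nat. { apply Mm. unfold Q; rewrite !fg. apply walk_one. apply Padj. }
    exists n; split; auto.
    apply le_INR in H. simpl in H.
    assert (INR n <= c)%R.
    { apply Rmult_le_reg_r with (/ c)%R. apply Rinv_0_lt_compat; auto.
      rewrite Rinv_r by lra. unfold Rdiv in H1. lra. }
    destruct (archimed c) as [A1 A2]. rewrite INR_IZR_INZ in H0.
    assert (Z.of_nat n < up c)%Z by (apply lt_IZR; lra). unfold M. lia. }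
  intros A x1 x2 x3 I1 I2 I3.
  set (R := remove_edges adj A).
  assert (Rsym : forall a b, R a b -> R b a) by (intros a b [? [? ?]]; split; auto).
  set (B := flat_map (fun p => [fst p; snd p]) A).
  assert (HAB : forall a b, In (a, b) A -> In a B /\ In b B).
  { intros a b I; split; apply in_flat_map; exists (a, b); simpl; auto. }
  destruct (ballset_fin adj nbh B M) as [lb Hlb].
  destruct (fin_max lb (fun v N => forall j, Q j = v -> (Z.abs j <= Z.of_nat N)%Z)) as [N0 HN0].
  { intros v n k Hnk H j Hj. specialize (H j Hj). lia. }
  { intros v _. destruct (Qsurj v) as [j0 Hj0]. exists (Z.abs_nat j0). intros j Hj.
    rewrite <- Hj0 in Hj. apply Qinj in Hj. subst. lia. }
  assert (Key : forall i, (Z.of_nat N0 < Z.abs i)%Z -> conn R (Q i) (Q (i + 1)%Z)).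
  { intros i Hi. destruct (QM i) as [k [Hk Wk]]. exists k.
    apply (avoid_walk A B HAB _ _ _ Wk). intros z' k' Hk' W' Iz.
    assert (In (Q i) lb). { apply Hlb. exists z'; split; auto. apply near_sym; auto. exists k'; split; auto; lia. }
    specialize (HN0 _ H i eq_refl). lia. }
  assert (csym : forall a b, conn R a b -> conn R b a).
  { intros a b [n Wn]; exists n; apply walk_sym; auto. }
  assert (ctrans : forall a b d, conn R a b -> conn R b d -> conn R a d).
  { intros a b d [n Wn] [m Wm]; exists (n + m)%nat; eapply walk_app; eauto. }
  set (pz := (Z.of_nat N0 + 1)%Z). set (nz := (- (Z.of_nat N0 + 1))%Z).
  assert (Cp : forall d : nat, conn R (Q pz) (Q (pz + Z.of_nat d)%Z)).
  { induction d. replace (pz + Z.of_nat 0)%Z with pz by lia. exists 0%nat; constructor.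
    eapply ctrans; [exact IHd|]. replace (pz + Z.of_nat (S d))%Z with (pz + Z.of_nat d + 1)%Z by lia.
    apply Key. unfold pz; lia. }
  assert (Cn : forall d : nat, conn R (Q nz) (Q (nz - Z.of_nat d)%Z)).
  { induction d. replace (nz - Z.of_nat 0)%Z with nz by lia. exists 0%nat; constructor.
    eapply ctrans; [exact IHd|]. apply csym.
    replace (nz - Z.of_nat d)%Z with (nz - Z.of_nat (S d) + 1)%Z by lia.
    apply Key. unfold nz; lia. }
  assert (Far : forall i, (Z.of_nat N0 < Z.abs i)%Z -> conn R (Q i) (Q pz) \/ conn R (Q i) (Q nz)).
  { intros i Hi. destruct (Z.lt_ge_cases 0 i).
    - left. apply csym. pose proof (Cp (Z.to_nat (i - pz))) as H'.
      replace (pz + Z.of_nat (Z.to_nat (i - pz)))%Z with i in H' by (unfold pz; lia). exact H'.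
    - right. apply csym. pose proof (Cn (Z.to_nat (nz - i))) as H'.
      replace (nz - Z.of_nat (Z.to_nat (nz - i)))%Z with i in H' by (unfold nz; lia). exact H'. }
  set (Lq := map (fun k : nat => Q (Z.of_nat k - Z.of_nat N0)%Z) (seq 0 (2 * N0 + 1))).
  assert (Each : forall x, infinite_component R x -> conn R x (Q pz) \/ conn R x (Q nz)).
  { intros x Ix. destruct (classic (exists v, conn R x v /\ ~ In v Lq)) as [[v [Cv Nv]]|Hno].
    - destruct (Qsurj v) as [i <-]. destruct (Z.le_gt_cases (Z.abs i) (Z.of_nat N0)).
      + exfalso. apply Nv. apply in_map_iff. exists (Z.to_nat (i + Z.of_nat N0)). split. f_equal; lia.
        apply in_seq. lia.
      + destruct (Far i) as [C|C]; [lia| left | right]; eapply ctrans; eauto.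
    - exfalso. apply Ix. exists Lq. intros v Cv. apply NNPP; intro; apply Hno; eauto. }
  destruct (Each _ I1) as [A1|A1], (Each _ I2) as [A2|A2], (Each _ I3) as [A3|A3];
  first [ left; eapply ctrans; [exact A1|apply csym; assumption]
        | right; left; eapply ctrans; [exact A1|apply csym; assumption]
        | right; right; eapply ctrans; [exact A2|apply csym; assumption] ].
Qed.

End Fwd.

Theorem theorem3p3 (V : Type) (adj : V -> V -> Prop) :
  simple_graph adj -> connected_graph adj -> infinite_type V ->
  bounded_degree adj ->
  ((exists (W : Type) (adjW : W -> W -> Prop),
      simple_graph adjW /\ bilipschitz_equiv adj adjW /\
      exists P : Z -> W, biinf_hamiltonian_path adjW P)
   <-> at_most_two_ends adj).
Proof.
  intros [asym airr] Gconn Ginf [D HD].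
  assert (nbh : forall v, exists l, forall w, adj v w -> In w l).
  { intros v; destruct (HD v) as [l [_ H]]; eauto. }
  split.
  - apply fwd; auto.
  - intros Gends.
    destruct (classic (exists v : V, True)) as [[y0 _]|Hne].
    2:{ exfalso. apply Ginf. exists []. intros v _. apply Hne; eauto. }
    destruct (classic (oneended adj (@Tc V))) as [One|Two].
    + destruct (ray_exists adj asym nbh Tc One y0) as [R [_ [Ri [Rs Rn]]]].
      { apply Tconn; auto. } { exact Ginf. } { constructor. }
      destruct (interleave adj asym R Ri) as [P [Pb Pn]].
      { intros x. apply Rs. constructor. } { exact Rn. }
      apply (ham_to_W adj asym airr P Pb Pn).
    + unfold oneended in Two.
      apply not_all_ex_not in Two as [K Two]. apply not_all_ex_not in Two as [z Two].
      apply not_all_ex_not in Two as [z' Two].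
      destruct (two_ended adj asym nbh Gconn Gends K z z') as [P [Pb Pn]];
        try (intro; apply Two; intros; auto; fail).
      * intro I; apply Two; intros; exfalso; auto.
      * intro I; apply Two; intros; exfalso; auto.
      * intro I; apply Two; intros; exfalso; auto.
      * intro I; apply Two; intros; exfalso; auto.
      * apply (ham_to_W adj asym airr P Pb). intros i. apply near_mono with 3%nat. lia. auto.
Qed.
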